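(* Let $F$ be a field containing $\mathcal K$ and let $w_1,\dots,w_N:\mathbb C\to F$ satisfy $L_j(u)w_m(u)=0$ for all $1\le m\le j\le N$ and all $u$, and assume the Casorati determinants $[0,1,\dots,j-1]$ are nonzero for all $1\le j\le N$ and all $u$. Define, for $1\le m\le N$, \[ \tilde x_m(u)=\frac{[0,\dots,m-1]\,[2,\dots,m]}{[1,\dots,m]\,[1,\dots,m-1]} \] (where $[2,\dots,m]$ and $[1,\dots,m-1]$ are $(m-1)\times(m-1)$ determinants, equal to $1$ when $m=1$). Then $\tilde x_m(u)=x_m(u)$ for all $1\le m\le N$ and all $u$.
   Context: Fix an integer $n\ge 2$ and put $N=2n+2$. Let $Q_a(u)$ ($1\le a\le n$, $u\in\mathbb C$) be algebraically independent commuting indeterminates, $\mathcal K$ the field of fractions of $\mathbb Z[Q_a(u)^{\pm1}]$. Put $d_a=1+\delta_{an}$, $Y_a(u)=Q_a(u-\frac{d_a}{2})/Q_a(u+\frac{d_a}{2})$ for $1\le a\le n$, $Y_0(u)=1$. For $1\le a\le n$ set $z_a(u)=\frac{Y_a(u+\frac a2)}{Y_{a-1}(u+\frac{a+1}2)}$, $z_{\bar a}(u)=\frac{Y_{a-1}(u+\frac{2n-a+3}2)}{Y_a(u+\frac{2n-a+4}2)}$; set $x_a(u)=z_a(u)$, $x_{2n+3-a}(u)=z_{\bar a}(u)$ for $1\le a\le n$, and $x_{n+1}(u)=-x_{n+2}(u)=\frac{Q_n(u+\frac n2)Q_n(u+\frac{n+4}2)}{Q_n(u+\frac{n+2}2)^2}$.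 $D$ is the shift operator ($D\,c(u)=c(u+1)D$), acting on $w:\mathbb C\to F$ by $(\sum_jc_jD^j)w(u)=\sum_jc_j(u)w(u+j)$. Let $\epsilon_i=1$ for $i\notin\{n+1,n+2\}$ and $\epsilon_{n+1}=\epsilon_{n+2}=-1$, and for $1\le j\le N$ define $L_j(u)=\prod_{i=N+1-j}^{N}\bigl(D-\epsilon_ix_i(u+n+1-i)\bigr)$, factors ordered by increasing $i$ from left to right. (Then $L_N(u)$ equals $L(u)=\prod_{i=1}^N(x_i(u+n+1-i)-D)$.) Casorati determinants: for integers $i_1,\dots,i_m$, $[i_1,\dots,i_m]$ is the function $u\mapsto\det(w_r(u+i_s))_{1\le r,s\le m}$, using $w_1,\dots,w_m$. *)

(* Defs.v *)
From HB Require Import structures.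
From mathcomp Require Import all_boot all_order all_algebra.
From mathcomp Require Import complex Rstruct.
From mathcomp Require Import mpoly.
Set Implicit Arguments. Unset Strict Implicit. Unset Printing Implicit Defensive.
Import GRing.Theory Num.Theory.
Local Open Scope ring_scope.

Definition CC : Type := complex Rdefinitions.R.

Definition hs (u : CC) (k : int) : CC := u + k%:~R / 2.
Definition ish (u : CC) (k : int) : CC := u + k%:~R.

Section Defs.
Variable F : fieldType.
Variable n : nat.
(* Q a u, meaningful for 1 <= a <= n *)
Variable Q : nat -> CC -> F.

Definition NN : nat := 2 * n + 2.

Definition alg_indep : Prop :=
  forall (k : nat) (idx : 'I_k -> nat * CC),
    injective idx ->
    (forall i, 1 <= (idx i).1 <= n)%N ->
    forall p : {mpoly int[k]}, p != 0 ->
      (map_mpoly intr p).@[fun i => Q (idx i).1 (idx i).2] != 0.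

Definition dd (a : nat) : int := (1 + (a == n))%N%:Z.

Definition Y (a : nat) (u : CC) : F :=
  if a == 0%N then 1 else Q a (hs u (- dd a)) / Q a (hs u (dd a)).

Definition z (a : nat) (u : CC) : F :=
  Y a (hs u a%:Z) / Y a.-1 (hs u (a.+1)%:Z).

Definition zbar (a : nat) (u : CC) : F :=
  Y a.-1 (hs u ((2 * n + 3)%:Z - a%:Z)) / Y a (hs u ((2 * n + 4)%:Z - a%:Z)).

Definition xmid (u : CC) : F :=
  Q n (hs u n%:Z) * Q n (hs u (n + 4)%:Z) / Q n (hs u (n + 2)%:Z) ^+ 2.

(* x_i for 1 <= i <= N (value 0 outside this range, never used) *)
Definition x (i : nat) (u : CC) : F :=
  if (1 <= i <= n)%N then z i u
  else if i == n.+1 then xmid u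
  else if i == n.+2 then - xmid u
  else if (n + 3 <= i <= NN)%N then zbar (2 * n + 3 - i) u
  else 0.

Definition eps (i : nat) : F := if (i == n.+1) || (i == n.+2) then -1 else 1.

(* action of the factor (D - eps_i x_i(u+n+1-i)) on w : C -> F *)
Definition factor (i : nat) (w : CC -> F) : CC -> F :=
  fun u => w (ish u 1) - eps i * x i (ish u ((n + 1)%:Z - i%:Z)) * w u.

(* L_j = prod_{i=N+1-j}^{N} (D - eps_i x_i(u+n+1-i)), increasing i left to right;
   the rightmost factor acts first. *)
Definition Lop (j : nat) (w : CC -> F) : CC -> F :=
  foldr factor w (iota (NN + 1 - j) j).

End Defs.

(* Casorati determinant [i_1,...,i_m] built from w_1,...,w_m (w indexed from 1). *)
Definition casorati (F : fieldType) (w : nat -> CC -> F) (s : seq nat) (u : CC) : F :=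
  \det (\matrix_(r < size s, c < size s) w r.+1 (ish u (nth 0%N s c)%:Z)).

Definition xtilde (F : fieldType) (w : nat -> CC -> F) (m : nat) (u : CC) : F :=
  casorati w (iota 0 m) u * casorati w (iota 2 m.-1) u
  / (casorati w (iota 1 m) u * casorati w (iota 1 m.-1) u).

(* Main.v *)
Require Import Defs.
From HB Require Import structures.
From mathcomp Require Import all_boot all_order all_algebra.
From mathcomp Require Import complex Rstruct.
From mathcomp Require Import mpoly.
From mathcomp Require Import zify ring lra.
Import GRing.Theory Num.Theory.
Local Open Scope ring_scope.

Lemma ishA (u : CC) (j k : int) : ish (ish u j) k = ish u (j + k).
Proof. by rewrite /ish intrD addrA. Qed.

Lemma ish0 (u : CC) : ish u 0 = u.
Proof. by rewrite /ish mulr0z addr0. Qed.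

Section Gen.
Variable F : fieldType.

Fixpoint Lg (bb : nat -> CC -> F) (s : nat) (w : CC -> F) : CC -> F :=
  match s with
  | 0 => w
  | s'.+1 => fun u => Lg bb s' w (ish u 1) - bb s' u * Lg bb s' w u
  end.

Fixpoint cf (bb : nat -> CC -> F) (s : nat) (u : CC) (t : nat) : F :=
  match s with
  | 0 => (t == 0)%:R
  | s'.+1 => (if t is t'.+1 then cf bb s' (ish u 1) t' else 0) - bb s' u * cf bb s' u t
  end.

Lemma Lg_cf bb s : forall u w K, (s < K)%N ->
  Lg bb s w u = \sum_(t < K) cf bb s u t * w (ish u t).
Proof.
elim: s => [|s IH] u w K hK /=.
  case: K hK => // K _; rewrite big_ord_recl /= ish0 mul1r big1 ?addr0 // => i _.
  by rewrite mul0r.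
case: K hK => // K hK.
rewrite (IH _ _ K) // (IH _ _ K.+1) ?(ltnW hK) //.
under eq_bigr => i _ do rewrite mulrBl.
rewrite sumrB mulr_sumr; congr (_ - _); last first.
  by apply: eq_bigr => i _; rewrite mulrA.
rewrite big_ord_recl /= mul0r add0r.
apply: eq_bigr => i _; rewrite ishA; congr (_ * w (ish u _)).
Qed.

Lemma cf_up bb s : forall u t, (s < t)%N -> cf bb s u t = 0.
Proof.
elim: s => [|s IH] u t hst /=; first by case: t hst.
case: t hst => // t hst; rewrite !IH ?mulr0 ?subr0 //; lia.
Qed.



Lemma cf_diag bb s : forall u, cf bb s u s = 1.
Proof.
elim: s => [|s IH] u /=; first by [].
by rewrite IH cf_up // mulr0 subr0.
Qed.


Lemma det_Lg bb (W : nat -> CC -> F) j u :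
  (forall (r s : nat) v, (r < s)%N -> (s < j)%N -> Lg bb s (W r.+1) v = 0) ->
  \det (\matrix_(r < j, c < j) W r.+1 (ish u (c : nat)%:Z)) =
  \prod_(r < j) Lg bb r (W r.+1) u.
Proof.
move=> H0.
set M := \matrix_(r < j, c < j) _.
pose C := \matrix_(t < j, s < j) cf bb s u t.
pose G := \matrix_(r < j, s < j) Lg bb s (W r.+1) u.
have MC : M *m C = G.
  apply/matrixP => r s; rewrite !mxE (Lg_cf _ _ _ _ _ (ltn_ord s)).
  by apply: eq_bigr => t _; rewrite !mxE mulrC.
have dC : \det C = 1.
  rewrite -det_tr det_trig; last first.
    by apply/is_trig_mxP => i k hik; rewrite !mxE cf_up.
  by rewrite big1 // => i _; rewrite !mxE cf_diag.
have dG : \det G = \prod_(r < j) Lg bb r (W r.+1) u.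
  rewrite det_trig; last first.
    by apply/is_trig_mxP => i k hik; rewrite !mxE H0.
  by apply: eq_bigr => i _; rewrite mxE.
by rewrite -dG -MC det_mulmx dC mulr1.
Qed.
End Gen.

Lemma det_cast (F : fieldType) m m' (e : m = m') (f : nat -> nat -> F) :
  \det (\matrix_(r < m, c < m) f r c) = \det (\matrix_(r < m', c < m') f r c).
Proof. by subst. Qed.

Lemma casorati_iota (F : fieldType) (w : nat -> CC -> F) k m u :
  casorati w (iota k m) u =
  \det (\matrix_(r < m, c < m) w r.+1 (ish (ish u k%:Z) (c : nat)%:Z)).
Proof.
rewrite /casorati (@det_cast _ _ _ (size_iota k m) (fun r c => w r.+1 (ish u (nth 0%N (iota k m) c)%:Z))).
congr (\det _); apply/matrixP => r c; rewrite !mxE nth_iota // ishA.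
by congr (w _ (ish u _)); lia.
Qed.

Lemma Qnz n (F : fieldType) (Q : nat -> CC -> F) :
  alg_indep n Q -> forall a v, (1 <= a <= n)%N -> Q a v != 0.
Proof.
move=> H a v ha.
have inj : injective (fun _ : 'I_1 => (a, v)) by move=> i j _; rewrite !ord1.
have nz : ('X_(ord0 : 'I_1) : {mpoly int[1]}) != 0.
  apply/eqP => e; have := @mcoeffXU 1%N int ord0 ord0.
  by rewrite e mcoeff0 eqxx.
have := H 1%N (fun _ => (a, v)) inj (fun _ => ha) _ nz.
by rewrite map_mpolyX mevalXU.
Qed.

Lemma hsA (u : CC) (j k : int) : hs (hs u j) k = hs u (j + k).
Proof. by rewrite /hs intrD mulrDl addrA. Qed.

Lemma ish_hs (u : CC) (k : int) : ish u k = hs u (k * 2).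
Proof.
rewrite /hs /ish intrM; congr (_ + _).
have h2 : (2 : CC) != 0 by rewrite pnatr_eq0.
by rewrite -mulrA divff // mulr1.
Qed.

Ltac unify_hs :=
  repeat match goal with
  | |- context [?f ?a (hs ?u ?k1)] =>
    match goal with
    | |- context [f a (hs u ?k2)] =>
      assert_fails (constr_eq k1 k2);
      let H := fresh in
      assert (H : f a (hs u k1) = f a (hs u k2)) by (congr (f a (hs u _)); lia);
      rewrite H; clear H
    end
  end.

Section Alg.
Variable F : fieldType.
Variable n : nat.
Variable Q : nat -> CC -> F.
Hypothesis n2 : (2 <= n)%N.
Hypothesis Qnz0 : forall a v, (1 <= a <= n)%N -> Q a v != 0.

Definition bb (s : nat) (u : CC) : F :=
  eps F n (NN n - s) * x n Q (NN n - s) (ish u ((n + 1)%:Z - (NN n - s)%:Z)).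

Lemma Ynz a v : (a <= n)%N -> Y n Q a v != 0.
Proof.
rewrite /Y; have [->|a0] := eqVneq a 0%N => an; first exact: oner_neq0.
by rewrite mulf_neq0 // ?invr_eq0 Qnz0 // lt0n a0.
Qed.

Lemma YnE v : Y n Q n v = Q n (hs v (-2)) / Q n (hs v 2).
Proof.
rewrite /Y /dd eqxx; case: eqP => [n0|_] //; first lia.
Qed.

Lemma xz i u : (1 <= i <= n)%N -> x n Q i u = z n Q i u.
Proof. by rewrite /x => ->. Qed.

Lemma xm1 u : x n Q n.+1 u = xmid n Q u.
Proof. rewrite /x ltnn andbF eqxx //. Qed.

Lemma xm2 u : x n Q n.+2 u = - xmid n Q u.
Proof.
rewrite /x; case: ifP => [/andP[]|_]; first lia.
case: eqP => [|_]; first lia. by rewrite eqxx.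
Qed.

Lemma xzb i u : (n + 3 <= i <= NN n)%N -> x n Q i u = zbar n Q (2 * n + 3 - i) u.
Proof.
move=> h; rewrite /x; case: ifP => [/andP[]|_]; first lia.
case: eqP => [|_]; first lia. case: eqP => [|_]; first lia. by rewrite h.
Qed.

Lemma eps1 i : i != n.+1 -> i != n.+2 -> eps F n i = 1.
Proof. by rewrite /eps => /negbTE -> /negbTE ->. Qed.

Lemma bbA s u : (s < n)%N -> bb s u = zbar n Q s.+1 (ish u (s%:Z - n%:Z - 1)).
Proof.
move=> hs; rewrite /bb eps1 ?mul1r; try (apply/eqP; rewrite /NN; lia).
rewrite xzb; last by rewrite /NN; lia.
have -> : (2 * n + 3 - (NN n - s))%N = s.+1 by rewrite /NN; lia.
congr (zbar _ _ _ (ish u _)); rewrite /NN; lia.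
Qed.

Lemma bbB u : bb n u = xmid n Q (ish u (-1)).
Proof.
rewrite /bb /eps.
have -> : (NN n - n)%N = n.+2 by rewrite /NN; lia.
rewrite eqxx orbT xm2 mulrN mulN1r opprK; congr (xmid _ _ (ish u _)); lia.
Qed.

Lemma bbC u : bb n.+1 u = - xmid n Q u.
Proof.
rewrite /bb /eps.
have -> : (NN n - n.+1)%N = n.+1 by rewrite /NN; lia.
rewrite eqxx xm1 mulN1r.
have -> : ((n + 1)%:Z - n.+1%:Z) = 0 by lia.
by rewrite ish0.
Qed.

Lemma bbD i u : (1 <= i <= n)%N -> bb (NN n - i) u = z n Q i (ish u (n%:Z + 1 - i%:Z)).
Proof.
move=> hi; rewrite /bb eps1 ?mul1r; try (apply/eqP; rewrite /NN; lia).
have -> : (NN n - (NN n - i))%N = i by rewrite /NN; lia.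
rewrite xz //; congr (z _ _ _ (ish u _)); lia.
Qed.

Lemma recA a u : (a.+2 <= n)%N ->
  x n Q a.+2 u * bb a.+1 u = x n Q a.+1 u * bb a (ish u 1).
Proof.
move=> ha; rewrite xz ?xz ?bbA; try lia.
rewrite /z /zbar /= !ish_hs !hsA.
unify_hs.
by field; rewrite !Ynz //; lia.
Qed.

Lemma rec0 u : x n Q 1 u * bb 0 u = 1.
Proof.
rewrite xz ?bbA; try lia.
rewrite /z /zbar /= !ish_hs !hsA.
have Y0 : forall v, Y n Q 0 v = 1 by [].
rewrite !Y0; unify_hs.
by field; rewrite ?Ynz ?Qnz0 ?oner_neq0 //; lia.
Qed.

Lemma recB u : x n Q n.+1 u * bb n u = x n Q n u * bb n.-1 (ish u 1).
Proof.
rewrite xm1 bbB xz ?bbA; try lia.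
rewrite prednK; last lia.
rewrite /z /zbar /xmid !ish_hs !hsA !YnE !hsA.
unify_hs.
by field; rewrite ?Ynz ?Qnz0 ?oner_neq0 //; lia.
Qed.

Lemma recC u : x n Q n.+2 u * bb n.+1 u = x n Q n.+1 u * bb n (ish u 1).
Proof.
rewrite xm2 xm1 bbC bbB ishA.
have -> : (1 + -1 : int) = 0 by [].
by rewrite ish0 mulrNN.
Qed.

Lemma recD u : x n Q n.+3 u * bb n.+2 u = x n Q n.+2 u * bb n.+1 (ish u 1).
Proof.
have -> : n.+2 = (NN n - n)%N by rewrite /NN; lia.
rewrite xzb; last by rewrite /NN; lia.
rewrite bbD; last lia.
have -> : (NN n - n)%N = n.+2 by rewrite /NN; lia.
rewrite xm2 bbC mulrNN.
have -> : (2 * n + 3 - n.+3)%N = n by lia.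
rewrite /z /zbar /xmid !ish_hs !hsA !YnE !hsA.
unify_hs.
by field; rewrite ?Ynz ?Qnz0 ?oner_neq0 //; lia.
Qed.

Lemma recE a u : (1 <= a)%N -> (a < n)%N ->
  x n Q (NN n - a).+1 u * bb (NN n - a) u = x n Q (NN n - a) u * bb (NN n - a.+1) (ish u 1).
Proof.
move=> a1 an.
rewrite !xzb; try (rewrite /NN; lia).
rewrite !bbD; try lia.
have -> : (2 * n + 3 - (NN n - a).+1)%N = a by rewrite /NN; lia.
have -> : (2 * n + 3 - (NN n - a))%N = a.+1 by rewrite /NN; lia.
rewrite /z /zbar /= !ish_hs !hsA.
unify_hs.
by field; rewrite ?Ynz ?Qnz0 ?oner_neq0 //; lia.
Qed.

Lemma rec_all m u : (1 <= m)%N -> (m < NN n)%N ->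
  x n Q m.+1 u * bb m u = x n Q m u * bb m.-1 (ish u 1).
Proof.
move=> m1 mN.
case: (ltnP m n) => [mn|nm].
  case: m m1 mn mN => // a _ ha _; exact: recA.
case: (ltnP m n.+3) => [mn3|nm3].
  have : (m == n) || (m == n.+1) || (m == n.+2) by lia.
  case/orP => [/orP[]|] /eqP ->; [exact: recB | exact: recC | exact: recD].
have [a -> [a1 an]] : exists2 a, m = (NN n - a)%N & (1 <= a)%N /\ (a < n)%N.
  by exists (NN n - m)%N; rewrite /NN in mN *; lia.
have -> : (NN n - a).-1 = (NN n - a.+1)%N by rewrite /NN; lia.
exact: recE.
Qed.

Lemma xT (bnz : forall r v, (r < NN n)%N -> bb r v != 0) k u : (k < NN n)%N ->
  x n Q k.+1 u = (\prod_(r < k) (bb r (ish u 1) / bb r u)) / bb k u.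
Proof.
elim: k => [|k IH] hk.
  rewrite big_ord0; have := rec0 u => e.
  have h0 := bnz 0%N u hk.
  by apply: (mulIf h0); rewrite e mul1r mulVf.
have hk' : (k < NN n)%N by lia.
have e := rec_all k.+1 u (ltn0Sn k) hk; rewrite /= in e.
have h1 := bnz k.+1 u hk. have h0 := bnz k u hk'.
have h2 := bnz k (ish u 1) hk'.
have -> : x n Q k.+2 u = x n Q k.+1 u * bb k (ish u 1) / bb k.+1 u.
  by rewrite -e mulfK.
rewrite IH // big_ord_recr /=.
by field; rewrite h0 h1.
Qed.
End Alg.

Lemma prod_nz (F : fieldType) k (f : 'I_k -> F) :
  (forall i, f i != 0) -> \prod_(i < k) f i != 0.
Proof. by move=> h; apply/prodf_neq0 => i _; exact: h. Qed.

Theorem mainTheorem17 (n : nat) (F : fieldType) (Q : nat -> CC -> F)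
  (w : nat -> CC -> F) :
  (2 <= n)%N ->
  alg_indep n Q ->
  (forall m j : nat, (1 <= m)%N -> (m <= j)%N -> (j <= NN n)%N ->
     forall u : CC, Lop n Q j (w m) u = 0) ->
  (forall j : nat, (1 <= j <= NN n)%N ->
     forall u : CC, casorati w (iota 0 j) u != 0) ->
  forall m : nat, (1 <= m <= NN n)%N ->
    forall u : CC, xtilde w m u = x n Q m u.
Proof.
move=> n2 hind hL hC m hm u.
have Qz := @Qnz n F Q hind.
set B := bb F n Q.
have LL : forall j, (j <= NN n)%N -> forall w0 v, Lop n Q j w0 v = Lg F B j w0 v.
  elim=> [|j IH] hj w0 v; first by [].
  rewrite /Lop.
  have -> : (NN n + 1 - j.+1)%N = (NN n - j)%N by lia.
  rewrite /= /factor -/(Lop n Q j w0).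
  have -> : (NN n - j).+1 = (NN n + 1 - j)%N by lia.
  rewrite -/(Lop n Q j w0) !IH; try lia.
  by [].
pose g r v := Lg F B r (w r.+1) v.
have cas : forall k j v, (j <= NN n)%N ->
    casorati w (iota k j) v = \prod_(r < j) g r (ish v k%:Z).
  move=> k j v hj; rewrite casorati_iota (@det_Lg F B) //.
  move=> r s v' rs sj; rewrite -LL; last lia.
  apply: hL; lia.
have gsh : forall r v, (r < NN n)%N -> g r (ish v 1) = B r v * g r v.
  move=> r v hr; have := hL r.+1 r.+1 (ltn0Sn r) (leqnn _) hr v.
  rewrite LL // /= => /eqP; rewrite subr_eq0 => /eqP.
  by [].
have gnz : forall r v, (r < NN n)%N -> g r v != 0.
  move=> r v hr; have h : (1 <= r.+1 <= NN n)%N by lia.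
  have := hC r.+1 h v; rewrite cas ?ish0; last lia.
  by rewrite big_ord_recr /= mulf_eq0 negb_or => /andP[].
have bnz : forall r v, (r < NN n)%N -> B r v != 0.
  move=> r v hr; have := gnz r (ish v 1) hr; rewrite gsh //.
  by rewrite mulf_eq0 negb_or => /andP[].
case: m hm => // k /andP[_ hk].
rewrite (@xT F n Q n2 Qz bnz) // -/B; clearbody B.
rewrite /xtilde [k.+1.-1]/= !cas; try lia.
have -> : ish u 2%:Z = ish (ish u 1) 1 by rewrite ishA.
have -> : ish u 0%:Z = u by rewrite ish0.
have E1 : \prod_(r < k) g r (ish (ish u 1) 1) =
   \prod_(r < k) (B r (ish u 1) * (B r u * g r u)).
  by apply: eq_bigr => r _; have hr := ltn_ord r; rewrite !gsh //; lia.
have E2 : forall j, (j <= k.+1)%N -> \prod_(r < j) g r (ish u 1) = \prod_(r < j) (B r u * g r u).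
  by move=> j hj; apply: eq_bigr => r _; have hr := ltn_ord r; rewrite !gsh //; lia.
rewrite E1 !E2 // prodf_div !big_split !big_ord_recr /=.

have h1 : \prod_(r < k) g r u != 0 by apply: prod_nz => r; apply: gnz; have := ltn_ord r; lia.
have h2 : \prod_(r < k) B r u != 0 by apply: prod_nz => r; apply: bnz; have := ltn_ord r; lia.
have h3 := gnz k u hk. have h4 := bnz k u hk.
by field; rewrite h1 h2 h3 h4.
Qed.
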